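(* Let $f:\mathbb{R}^n\to\mathbb{R}$ and $c:\mathbb{R}^n\to\mathbb{R}^m$, and let $\{x_k\}$, $\{d_k\}$, $\{y_k\}$ be generated by either Algorithm 1 or Algorithm 2 (described in the context) applied to $\min_x f(x)$ subject to $c(x)=0$. Suppose the Standing Assumption and the Matrix Assumption of the context hold, and that the algorithm does not terminate finitely. Then $$\lim_{k\to\infty}\|d_k\|_2=0,\qquad \lim_{k\to\infty}\|c_k\|_2=0,\qquad \lim_{k\to\infty}\|g_k+J_k^Ty_k\|_2=0.$$
   Context: Notation: $g_k=\nabla f(x_k)$, $c_k=c(x_k)$, $J_k=\nabla c(x_k)^T\in\mathbb{R}^{m\times n}$. Merit function $\phi(x,\tau)=\tau f(x)+\|c(x)\|_1$ for $\tau>0$. Model reduction: $\Delta q(x,\tau,g,H,d)=-\tau\big(g^Td+\tfrac12\max\{d^THd,0\}\big)+\|c(x)\|_1$. Matrix Assumption: $\{H_k\}$ are symmetric $n\times n$ matrices with $\|H_k\|_2\le\kappa_H$ and $u^TH_ku\ge\zeta\|u\|_2^2$ for all $u$ with $J_ku=0$, for constants $\kappa_H,\zeta>0$. Common iteration ($k=0,1,\dots$): $(d_k,y_k)$ solves $H_kd_k+J_k^Ty_k=-g_k$, $J_kd_k=-c_k$. If $g_k+J_k^Ty_k=0$ and $c_k=0$, stop. Otherwise set $\tau_k^{trial}=\infty$ if $g_k^Td_k+\max\{d_k^TH_kd_k,0\}\le0$ and $\tau_k^{trial}=\frac{(1-\sigma)\|c_k\|_1}{g_k^Td_k+\max\{d_k^TH_kd_k,0\}}$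 otherwise; set $\tau_k=\tau_{k-1}$ if $\tau_{k-1}\le\tau_k^{trial}$ and $\tau_k=(1-\epsilon)\tau_k^{trial}$ otherwise. Then choose $\alpha_k>0$ and set $x_{k+1}=x_k+\alpha_kd_k$. The sufficient decrease condition for a trial stepsize $\alpha$ is (SD): $\phi(x_k+\alpha d_k,\tau_k)\le\phi(x_k,\tau_k)-\eta\alpha\,\Delta q(x_k,\tau_k,g_k,H_k,d_k)$. Algorithm 1 (inputs $x_0$, $\tau_{-1}>0$, $\epsilon,\sigma,\eta\in(0,1)$, $\rho>1$, $L_{-1}>0$, $\gamma_{-1,i}>0$ for $i=1,\dots,m$): choose $L_{k,0}\in(0,L_{k-1}]$ and $\gamma_{k,i,0}\in(0,\gamma_{k-1,i}]$. For $j=0,1,\dots$: with $\Lambda_{k,j}=\tau_kL_{k,j}+\sum_i\gamma_{k,i,j}$, set $\widehat\alpha_{k,j}=\frac{2(1-\eta)\Delta q(x_k,\tau_k,g_k,H_k,d_k)}{\Lambda_{k,j}\|d_k\|_2^2}$, $\widetilde\alpha_{k,j}=\widehat\alpha_{k,j}-\frac{4\|c_k\|_1}{\Lambda_{k,j}\|d_k\|_2^2}$, and $\alpha_{k,j}=\widehat\alpha_{k,j}$ if $\widehat\alpha_{k,j}<1$, $\alpha_{k,j}=1$ if $\widetilde\alpha_{k,j}\le1\le\widehat\alpha_{k,j}$, $\alpha_{k,j}=\widetilde\alpha_{k,j}$ if $\widetilde\alpha_{k,j}>1$. Let (LF) be $f(x_k+\alpha_{k,j}d_k)\le f(x_k)+\alpha_{k,j}g_k^Td_k+\tfrac12L_{k,j}\alpha_{k,j}^2\|d_k\|_2^2$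 and (LC$_i$) be $|c_i(x_k+\alpha_{k,j}d_k)|\le|c_i(x_k)+\alpha_{k,j}\nabla c_i(x_k)^Td_k|+\tfrac12\gamma_{k,i,j}\alpha_{k,j}^2\|d_k\|_2^2$. If (SD) holds with $\alpha=\alpha_{k,j}$, or (LF) and all (LC$_i$) hold, set $L_k=L_{k,j}$, $\gamma_{k,i}=\gamma_{k,i,j}$, $\alpha_k=\alpha_{k,j}$ and end the inner loop; otherwise set $L_{k,j+1}=\rho L_{k,j}$ if (LF) fails (else $L_{k,j}$), and $\gamma_{k,i,j+1}=\rho\gamma_{k,i,j}$ if (LC$_i$) fails (else $\gamma_{k,i,j}$). Algorithm 2 (inputs $x_0$, $\tau_{-1}>0$, $\epsilon,\sigma,\eta,\nu\in(0,1)$, $\alpha>0$): $\alpha_k=\alpha_{k,j}=\nu^j\alpha$ for the smallest $j\in\{0,1,\dots\}$ such that (SD) holds with $\alpha=\alpha_{k,j}$. Standing Assumption: there is an open convex set $\mathcal X\subseteq\mathbb{R}^n$ containing all iterates $x_k$ and all trial points $x_k+\alpha_{k,j}d_k$; $f$ is continuously differentiable and bounded below on $\mathcal X$; $\nabla f$ is bounded and Lipschitz with constant $L$ on $\mathcal X$; $c$ and $\nabla c^T$ are bounded on $\mathcal X$; each $\nabla c_i$ is Lipschitz with constant $\gamma_i$ on $\mathcal X$; the singular values of $\nabla c(x)^T$ are bounded away from zero uniformly over $x\in\mathcal X$. *)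

(* Defs.v *)
From HB Require Import structures.
From mathcomp Require Import all_boot all_order all_algebra.
From mathcomp Require Import reals.
Set Implicit Arguments. Unset Strict Implicit. Unset Printing Implicit Defensive.
Import Order.TTheory GRing.Theory Num.Theory.
Local Open Scope ring_scope.

Section Defs.
Variable R : realType.

Definition dotv n (u v : 'cV[R]_n) : R := \sum_(i < n) u i ord0 * v i ord0.
Definition norm2 n (u : 'cV[R]_n) : R := Num.sqrt (\sum_(i < n) u i ord0 ^+ 2).
Definition norm1 n (u : 'cV[R]_n) : R := \sum_(i < n) `|u i ord0|.
Definition frob m n (A : 'M[R]_(m, n)) : R :=
  Num.sqrt (\sum_(i < m) \sum_(j < n) A i j ^+ 2).

Definition lim0 (u : nat -> R) : Prop :=
  forall e : R, 0 < e -> exists N : nat, forall k, (N <= k)%N -> `|u k| < e.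

Definition has_gradient n (F : 'cV[R]_n -> R) (G : 'cV[R]_n) (x : 'cV[R]_n) : Prop :=
  forall e : R, 0 < e -> exists2 delta : R, 0 < delta &
    forall z, norm2 (z - x) < delta ->
      `|F z - F x - dotv G (z - x)| <= e * norm2 (z - x).

Definition open_set n (X : 'cV[R]_n -> Prop) : Prop :=
  forall x, X x -> exists2 r : R, 0 < r & forall z, norm2 (z - x) < r -> X z.

Definition convex_set n (X : 'cV[R]_n -> Prop) : Prop :=
  forall x z (t : R), X x -> X z -> 0 <= t <= 1 -> X (t *: x + (1 - t) *: z).

(* gradient of c_i at x: transpose of row i of the Jacobian J(x) = grad c(x)^T *)
Definition gradc n m (J : 'cV[R]_n -> 'M[R]_(m, n)) (x : 'cV[R]_n) (i : 'I_m)
  : 'cV[R]_n := (row i (J x))^T.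

(* all singular values of the m x n matrix A are >= s
   (smallest singular value = min over unit vectors of |A^T v| if m <= n,
    of |A u| if n <= m) *)
Definition min_sv_ge m n (A : 'M[R]_(m, n)) (s : R) : Prop :=
  ((m <= n)%N -> forall v : 'cV[R]_m, s * norm2 v <= norm2 (A^T *m v)) /\
  ((n <= m)%N -> forall u : 'cV[R]_n, s * norm2 u <= norm2 (A *m u)).

(* Standing Assumption (except "X contains iterates / trial points", stated separately) *)
Definition standing_assumption n m (X : 'cV[R]_n -> Prop) (f : 'cV[R]_n -> R)
  (gf : 'cV[R]_n -> 'cV[R]_n) (c : 'cV[R]_n -> 'cV[R]_m)
  (J : 'cV[R]_n -> 'M[R]_(m, n)) : Prop :=
  open_set X /\ convex_set X /\
  (forall x, X x -> has_gradient f (gf x) x) /\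
  (forall x, X x -> forall e : R, 0 < e -> exists2 delta : R, 0 < delta &
      forall z, X z -> norm2 (z - x) < delta -> norm2 (gf z - gf x) < e) /\
  (forall x, X x -> forall i : 'I_m,
      has_gradient (fun z => c z i ord0) (gradc J x i) x) /\
  (exists flow : R, forall x, X x -> flow <= f x) /\
  (exists B : R, forall x, X x -> norm2 (gf x) <= B) /\
  (exists L : R, forall x z, X x -> X z -> norm2 (gf x - gf z) <= L * norm2 (x - z)) /\
  (exists B : R, forall x, X x -> norm2 (c x) <= B) /\
  (exists B : R, forall x, X x -> frob (J x) <= B) /\
  (forall i : 'I_m, exists gam : R, forall x z, X x -> X z ->
      norm2 (gradc J x i - gradc J z i) <= gam * norm2 (x - z)) /\
  (exists2 s : R, 0 < s & forall x, X x -> min_sv_ge (J x) s).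

Definition matrix_assumption n m (H : nat -> 'M[R]_n) (Jk : nat -> 'M[R]_(m, n)) : Prop :=
  exists kH zeta : R, 0 < kH /\ 0 < zeta /\
    forall k, (H k)^T = H k /\
      (forall u : 'cV[R]_n, norm2 (H k *m u) <= kH * norm2 u) /\
      (forall u : 'cV[R]_n, Jk k *m u = 0 -> zeta * norm2 u ^+ 2 <= dotv u (H k *m u)).

Definition merit n m (f : 'cV[R]_n -> R) (c : 'cV[R]_n -> 'cV[R]_m) (x : 'cV[R]_n)
  (tau : R) : R := tau * f x + norm1 (c x).

Definition dq n m (c : 'cV[R]_n -> 'cV[R]_m) (x : 'cV[R]_n) (tau : R)
  (g : 'cV[R]_n) (H : 'M[R]_n) (d : 'cV[R]_n) : R :=
  - tau * (dotv g d + 2^-1 * Num.max (dotv d (H *m d)) 0) + norm1 (c x).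

Definition tau_next n (eps sig taup : R) (g : 'cV[R]_n) (H : 'M[R]_n) (d : 'cV[R]_n)
  (cx1 : R) : R :=
  let den := dotv g d + Num.max (dotv d (H *m d)) 0 in
  if den <= 0 then taup (* tau_trial = +oo *)
  else let tr := (1 - sig) * cx1 / den in
       if taup <= tr then taup else (1 - eps) * tr.

Definition common_iteration n m (gf : 'cV[R]_n -> 'cV[R]_n) (c : 'cV[R]_n -> 'cV[R]_m)
  (J : 'cV[R]_n -> 'M[R]_(m, n)) (H : nat -> 'M[R]_n) (x d : nat -> 'cV[R]_n)
  (y : nat -> 'cV[R]_m) (tau alpha : nat -> R) (tau0 eps sig : R) : Prop :=
  forall k,
    H k *m d k + (J (x k))^T *m y k = - gf (x k) /\
    J (x k) *m d k = - c (x k) /\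
    tau k = tau_next eps sig (if k is k'.+1 then tau k' else tau0)
              (gf (x k)) (H k) (d k) (norm1 (c (x k))) /\
    0 < alpha k /\
    x k.+1 = x k + alpha k *: d k.

Definition no_finite_termination n m (gf : 'cV[R]_n -> 'cV[R]_n)
  (c : 'cV[R]_n -> 'cV[R]_m) (J : 'cV[R]_n -> 'M[R]_(m, n))
  (x : nat -> 'cV[R]_n) (y : nat -> 'cV[R]_m) : Prop :=
  forall k, ~ (gf (x k) + (J (x k))^T *m y k = 0 /\ c (x k) = 0).

Definition SD n m (f : 'cV[R]_n -> R) (gf : 'cV[R]_n -> 'cV[R]_n)
  (c : 'cV[R]_n -> 'cV[R]_m) (H : nat -> 'M[R]_n) (x d : nat -> 'cV[R]_n)
  (tau : nat -> R) (eta : R) (k : nat) (a : R) : Prop :=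
  merit f c (x k + a *: d k) (tau k) <=
  merit f c (x k) (tau k) - eta * a * dq c (x k) (tau k) (gf (x k)) (H k) (d k).

Definition alg1_step (eta Lam dqv cx1 nd2 : R) : R :=
  let ahat := 2 * (1 - eta) * dqv / (Lam * nd2) in
  let atil := ahat - 4 * cx1 / (Lam * nd2) in
  if ahat < 1 then ahat else if atil <= 1 then 1 else atil.

(* The stepsizes alpha are produced by Algorithm 1 (with inner-loop data
   L_{k,j}, gamma_{k,i,j}, and terminating inner index jk k); all trial points lie in X. *)
Definition generated_by_alg1 n m (X : 'cV[R]_n -> Prop) (f : 'cV[R]_n -> R)
  (gf : 'cV[R]_n -> 'cV[R]_n) (c : 'cV[R]_n -> 'cV[R]_m)
  (J : 'cV[R]_n -> 'M[R]_(m, n)) (H : nat -> 'M[R]_n) (x d : nat -> 'cV[R]_n)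
  (tau alpha : nat -> R) (eta rho Lm1 : R) (gm1 : 'I_m -> R) : Prop :=
  1 < rho /\ 0 < Lm1 /\ (forall i, 0 < gm1 i) /\
  exists (Lkj : nat -> nat -> R) (gkj : nat -> nat -> 'I_m -> R) (jk : nat -> nat),
    let Lprev k := if k is k'.+1 then Lkj k' (jk k') else Lm1 in
    let gprev k i := if k is k'.+1 then gkj k' (jk k') i else gm1 i in
    let a k j := alg1_step eta (tau k * Lkj k j + \sum_(i < m) gkj k j i)
                   (dq c (x k) (tau k) (gf (x k)) (H k) (d k))
                   (norm1 (c (x k))) (norm2 (d k) ^+ 2) in
    let LF k j := f (x k + a k j *: d k) <=
                  f (x k) + a k j * dotv (gf (x k)) (d k)
                  + 2^-1 * Lkj k j * a k j ^+ 2 * norm2 (d k) ^+ 2 in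
    let LC k j i := `|c (x k + a k j *: d k) i ord0| <=
                  `|c (x k) i ord0 + a k j * dotv (gradc J (x k) i) (d k)|
                  + 2^-1 * gkj k j i * a k j ^+ 2 * norm2 (d k) ^+ 2 in
    let acc k j := SD f gf c H x d tau eta k (a k j) \/ (LF k j /\ forall i, LC k j i) in
    forall k,
      (0 < Lkj k 0%N /\ Lkj k 0%N <= Lprev k) /\
      (forall i, 0 < gkj k 0%N i /\ gkj k 0%N i <= gprev k i) /\
      (forall j, (j < jk k)%N ->
         ~ acc k j /\
         (LF k j -> Lkj k j.+1 = Lkj k j) /\ (~ LF k j -> Lkj k j.+1 = rho * Lkj k j) /\
         (forall i, (LC k j i -> gkj k j.+1 i = gkj k j i) /\
                    (~ LC k j i -> gkj k j.+1 i = rho * gkj k j i))) /\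
      acc k (jk k) /\
      alpha k = a k (jk k) /\
      (forall j, (j <= jk k)%N -> X (x k + a k j *: d k)).

Definition generated_by_alg2 n m (X : 'cV[R]_n -> Prop) (f : 'cV[R]_n -> R)
  (gf : 'cV[R]_n -> 'cV[R]_n) (c : 'cV[R]_n -> 'cV[R]_m)
  (H : nat -> 'M[R]_n) (x d : nat -> 'cV[R]_n)
  (tau alpha : nat -> R) (eta nu abar : R) : Prop :=
  0 < nu < 1 /\ 0 < abar /\
  forall k, exists jk : nat,
    alpha k = nu ^+ jk * abar /\
    SD f gf c H x d tau eta k (nu ^+ jk * abar) /\
    (forall j, (j < jk)%N -> ~ SD f gf c H x d tau eta k (nu ^+ j * abar)) /\
    (forall j, (j <= jk)%N -> X (x k + (nu ^+ j * abar) *: d k)).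

End Defs.

(* Main.v *)
Require Import Defs.
From HB Require Import structures.
From mathcomp Require Import all_boot all_order all_algebra.
From mathcomp Require Import reals classical_sets boolp.
From mathcomp Require Import ring lra.
Import Order.TTheory GRing.Theory Num.Theory.
Local Open Scope ring_scope.

Set Implicit Arguments. Unset Strict Implicit. Unset Printing Implicit Defensive.
Section Vec.
Variable R : realType.
Implicit Types (n : nat).

Lemma dotvE n (u v : 'cV[R]_n) : dotv u v = (u^T *m v) ord0 ord0.
Proof. by rewrite /dotv mxE; apply: eq_bigr => i _; rewrite mxE. Qed.

Lemma dotvC n (u v : 'cV[R]_n) : dotv u v = dotv v u.
Proof. by apply: eq_bigr => i _; rewrite mulrC. Qed.

Lemma dotvDl n (u v w : 'cV[R]_n) : dotv (u + v) w = dotv u w + dotv v w.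
Proof. rewrite /dotv -big_split; apply: eq_bigr => i _; by rewrite mxE mulrDl. Qed.

Lemma dotvDr n (u v w : 'cV[R]_n) : dotv w (u + v) = dotv w u + dotv w v.
Proof. by rewrite dotvC dotvDl !(dotvC w). Qed.

Lemma dotvZl n a (u w : 'cV[R]_n) : dotv (a *: u) w = a * dotv u w.
Proof. rewrite /dotv mulr_sumr; apply: eq_bigr => i _; by rewrite mxE mulrA. Qed.

Lemma dotvZr n a (u w : 'cV[R]_n) : dotv w (a *: u) = a * dotv w u.
Proof. by rewrite dotvC dotvZl dotvC. Qed.

Lemma dotvNl n (u w : 'cV[R]_n) : dotv (- u) w = - dotv u w.
Proof. by rewrite -scaleN1r dotvZl mulN1r. Qed.

Lemma dotvNr n (u w : 'cV[R]_n) : dotv w (- u) = - dotv w u.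
Proof. by rewrite dotvC dotvNl dotvC. Qed.

Lemma dotvBl n (u v w : 'cV[R]_n) : dotv (u - v) w = dotv u w - dotv v w.
Proof. by rewrite dotvDl dotvNl. Qed.

Lemma dotvBr n (u v w : 'cV[R]_n) : dotv w (u - v) = dotv w u - dotv w v.
Proof. by rewrite dotvDr dotvNr. Qed.

Lemma dotv0r n (u : 'cV[R]_n) : dotv u 0 = 0.
Proof. by rewrite /dotv big1 // => i _; rewrite mxE mulr0. Qed.

Lemma dotv0l n (u : 'cV[R]_n) : dotv 0 u = 0.
Proof. by rewrite dotvC dotv0r. Qed.

Lemma dotv_mul n p (A : 'M[R]_(p, n)) (u : 'cV[R]_p) (v : 'cV[R]_n) :
  dotv u (A *m v) = dotv (A^T *m u) v.
Proof. by rewrite !dotvE trmx_mul trmxK mulmxA. Qed.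

Lemma dotv_ge0 n (u : 'cV[R]_n) : 0 <= dotv u u.
Proof. by apply: sumr_ge0 => i _; rewrite -expr2 sqr_ge0. Qed.

Lemma norm2E n (u : 'cV[R]_n) : norm2 u = Num.sqrt (dotv u u).
Proof. by rewrite /norm2 /dotv; congr Num.sqrt; apply: eq_bigr => i _; rewrite expr2. Qed.

Lemma norm2_ge0 n (u : 'cV[R]_n) : 0 <= norm2 u.
Proof. exact: sqrtr_ge0. Qed.

Lemma norm2_sq n (u : 'cV[R]_n) : norm2 u ^+ 2 = dotv u u.
Proof. by rewrite norm2E sqr_sqrtr // dotv_ge0. Qed.

Lemma dotv_eq0 n (u : 'cV[R]_n) : dotv u u = 0 -> u = 0.
Proof.
move=> h; apply/matrixP => i j; rewrite (ord1 j) mxE.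
have := @psumr_eq0P R _ predT (fun i => u i ord0 * u i ord0).
have hh : forall k : 'I_n, predT k -> 0 <= u k ord0 * u k ord0.
  by move=> k _; rewrite -expr2 sqr_ge0.
move=> /(_ hh h i isT) /eqP; rewrite mulf_eq0 orbb => /eqP //.
Qed.

Lemma norm2_eq0 n (u : 'cV[R]_n) : norm2 u = 0 -> u = 0.
Proof. by move=> h; apply: dotv_eq0; rewrite -norm2_sq h expr0n. Qed.

Lemma norm2_0 n : norm2 (0 : 'cV[R]_n) = 0.
Proof. by rewrite norm2E dotv0r sqrtr0. Qed.

Lemma CS2 n (u v : 'cV[R]_n) : dotv u v ^+ 2 <= dotv u u * dotv v v.
Proof.
have hv := dotv_ge0 v; have hu := dotv_ge0 u.
have [v0|vpos] := eqVneq (dotv v v) 0.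
  by rewrite (dotv_eq0 v0) !dotv0r mulr0 expr0n.
have vp : 0 < dotv v v by rewrite lt_def vpos hv.
set t := dotv u v / dotv v v.
have := dotv_ge0 (u - t *: v).
rewrite !dotvBl !dotvBr !dotvZl !dotvZr (dotvC v u).
have e : t * dotv v v = dotv u v by rewrite /t mulfVK.
move=> h.
have : 0 <= dotv u u - t * dotv u v by nra.
rewrite /t => h2.
have e2 : dotv u v / dotv v v * dotv u v * dotv v v = dotv u v ^+ 2.
  by field; rewrite vpos.
have := mulr_ge0 h2 hv; rewrite mulrBl e2; lra.
Qed.

Lemma CS n (u v : 'cV[R]_n) : `|dotv u v| <= norm2 u * norm2 v.
Proof.
have h := CS2 u v.
rewrite -ler_sqr ?nnegrE ?mulr_ge0 ?norm2_ge0 //.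
by rewrite exprMn !norm2_sq real_normK ?num_real.
Qed.

Lemma dotv_le n (u v : 'cV[R]_n) : dotv u v <= norm2 u * norm2 v.
Proof. exact: le_trans (ler_norm _) (CS u v). Qed.

Lemma norm2D n (u v : 'cV[R]_n) : norm2 (u + v) <= norm2 u + norm2 v.
Proof.
rewrite -ler_sqr ?nnegrE ?addr_ge0 ?norm2_ge0 //.
rewrite norm2_sq dotvDl !dotvDr sqrrD !norm2_sq (dotvC v u).
have := dotv_le u v; nra.
Qed.

Lemma norm2Z n a (u : 'cV[R]_n) : norm2 (a *: u) = `|a| * norm2 u.
Proof.
rewrite !norm2E dotvZl dotvZr mulrA sqrtrM ?sqr_ge0 -?expr2 //.
by rewrite sqrtr_sqr.
Qed.

Lemma norm2N n (u : 'cV[R]_n) : norm2 (- u) = norm2 u.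
Proof. by rewrite -scaleN1r norm2Z normrN1 mul1r. Qed.

Lemma norm2B n (u v : 'cV[R]_n) : norm2 (u - v) = norm2 (v - u).
Proof. by rewrite -norm2N opprB. Qed.

Lemma norm1_ge0 n (u : 'cV[R]_n) : 0 <= norm1 u.
Proof. by apply: sumr_ge0 => i _. Qed.

Lemma norm2_le1 n (u : 'cV[R]_n) : norm2 u <= norm1 u.
Proof.
rewrite -ler_sqr ?nnegrE ?norm1_ge0 ?norm2_ge0 //.
rewrite /norm2 sqr_sqrtr; last by apply: sumr_ge0 => i _; rewrite sqr_ge0.
rewrite /norm1 expr2 mulr_suml; apply: ler_sum => i _.
rewrite -real_normK ?num_real // expr2 ler_wpM2l //.
rewrite (bigD1 i) //= lerDl; apply: sumr_ge0 => j _; exact: normr_ge0.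
Qed.

Lemma dotv_bnd n (H : 'M[R]_n) kH (a b : 'cV[R]_n) :
  (forall w, norm2 (H *m w) <= kH * norm2 w) ->
  `|dotv a (H *m b)| <= kH * (norm2 a * norm2 b).
Proof.
move=> hH; apply: le_trans (CS _ _) _.
rewrite mulrCA ler_wpM2l ?norm2_ge0 //.
Qed.

Lemma norm2_sq_le1 n (u : 'cV[R]_n) B : norm2 u <= B -> norm2 u ^+ 2 <= B * norm1 u.
Proof.
move=> h; have := norm2_le1 u; have := norm2_ge0 u; nra.
Qed.

Lemma mx_l (a : R) : 0 <= a -> Num.max a 0 = a. Proof. by move=> h; rewrite max_l. Qed.
Lemma mx_r (a : R) : a <= 0 -> Num.max a 0 = 0. Proof. by move=> h; rewrite max_r. Qed.
Lemma mx_ge1 (a : R) : a <= Num.max a 0. Proof. by rewrite le_max lexx. Qed.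
Lemma mx_ge0 (a : R) : 0 <= Num.max a 0. Proof. by rewrite le_max lexx orbT. Qed.

End Vec.

Set Implicit Arguments. Unset Strict Implicit. Unset Printing Implicit Defensive.
Section Desc.
Variable R : realType.
Local Open Scope classical_set_scope.

Lemma loc_nonincr (W : R -> R) :
  (forall t, 0 <= t <= 1 -> exists2 del, 0 < del & forall r, 0 <= r <= 1 ->
     `|r - t| < del -> (r <= t -> W t <= W r) /\ (t <= r -> W r <= W t)) ->
  W 1 <= W 0.
Proof.
move=> hloc.
pose S := [set t : R | (0 <= t <= 1) /\ forall r, 0 <= r <= t -> W r <= W 0].
have S0 : S 0.
  split; first by rewrite lexx ler01.
  by move=> r /andP[h1 h2]; have -> : r = 0 by apply/eqP; rewrite eq_le h1 h2.
have ub1 : ubound S 1 by move=> t [/andP[_ ->] _].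
have hs : has_sup S by split; [exists 0 | exists 1].
set s := sup S.
have s0 : 0 <= s by apply: sup_upper_bound.
have s1 : s <= 1 by apply: ge_sup => //; exists 0.
have A : forall r, 0 <= r -> r < s -> W r <= W 0.
  move=> r r0 rs.
  have sr0 : 0 < s - r by rewrite subr_gt0.
  have [e [_ he] lt] := sup_adherent sr0 hs.
  apply: he; rewrite r0 /=; apply/ltW; move: lt; rewrite /s; lra.
have [del del0 hd] := hloc s (introT andP (conj s0 s1)).
have B : W s <= W 0.
  have [->|sn0] := eqVneq s 0; first by [].
  have sp : 0 < s by rewrite lt_def sn0 s0.
  pose r := s - Num.min s del / 2.
  have hm1 : Num.min s del <= s by rewrite ge_min lexx.
  have hm2 : Num.min s del <= del by rewrite ge_min lexx orbT.
  have hm0 : 0 < Num.min s del by rewrite lt_min sp del0.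
  have r0 : 0 <= r by rewrite /r; lra.
  have rs : r < s by rewrite /r; lra.
  have hrs : `|r - s| < del by rewrite /r ler0_norm; lra.
  have [h1 _] := hd r (introT andP (conj r0 (le_trans (ltW rs) s1))) hrs.
  by apply: le_trans (h1 (ltW rs)) (A _ r0 rs).
have C : s = 1.
  apply/eqP; rewrite eq_le s1 /=; rewrite leNgt; apply/negP => lt1.
  pose s' := s + Num.min (1 - s) del / 2.
  have hm1 : Num.min (1 - s) del <= 1 - s by rewrite ge_min lexx.
  have hm2 : Num.min (1 - s) del <= del by rewrite ge_min lexx orbT.
  have hm0 : 0 < Num.min (1 - s) del by rewrite lt_min del0 subr_gt0 lt1.
  have : S s'.
    split; first by apply/andP; split; rewrite /s'; lra.
    move=> r /andP[r0 rs'].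
    have [rs|sr] := ltP r s; first exact: A.
    have r01 : 0 <= r <= 1 by apply/andP; split => //; move: rs'; rewrite /s'; lra.
    have hrs : `|r - s| < del by rewrite ger0_norm ?subr_ge0 //; move: rs'; rewrite /s'; lra.
    have [_ h2] := hd r r01 hrs.
    by apply: le_trans (h2 sr) B.
  move=> /sup_upper_bound-/(_ hs); rewrite -/s /s'; lra.
by rewrite -C.
Qed.

Lemma le_eps (a b : R) : (forall e, 0 < e -> a <= b + e) -> a <= b.
Proof.
move=> h; rewrite leNgt; apply/negP => ab.
have h2 : 0 < (a - b) / 2 by lra.
have := h _ h2; lra.
Qed.

Lemma seg_in n (X : 'cV[R]_n -> Prop) x z t : convex_set X -> X x -> X z ->
  0 <= t <= 1 -> X (x + t *: (z - x)).
Proof.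
move=> cX Xx Xz ht.
have -> : x + t *: (z - x) = t *: z + (1 - t) *: x.
  by apply/matrixP => i j; rewrite !mxE; ring.
exact: cX.
Qed.

Lemma descent_up n (X : 'cV[R]_n -> Prop) (F : 'cV[R]_n -> R) (G : 'cV[R]_n -> 'cV[R]_n) L :
  convex_set X -> (forall x, X x -> has_gradient F (G x) x) -> 0 <= L ->
  (forall x z, X x -> X z -> norm2 (G x - G z) <= L * norm2 (x - z)) ->
  forall x z, X x -> X z ->
  F z - F x - dotv (G x) (z - x) <= L / 2 * norm2 (z - x) ^+ 2.
Proof.
move=> cX hG L0 hL x z Xx Xz.
set d := z - x; set D := norm2 d.
have D0 : 0 <= D := norm2_ge0 d.
set gd := dotv (G x) d.
pose p (t : R) := x + t *: d.
apply: le_eps => e e0.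
pose W t := F (p t) - F x - t * gd - L / 2 * t ^+ 2 * D ^+ 2 - e * t.
suff : W 1 <= W 0.
  have ep1 : p 1 = z by rewrite /p scale1r /d addrC subrK.
  have ep0 : p 0 = x by rewrite /p scale0r addr0.
  rewrite /W ep1 ep0; lra.
apply: (@loc_nonincr W) => t /andP[t0 t1].
have Xp : X (p t) by rewrite /p /d; apply: seg_in => //; rewrite t0 t1.
pose e1 := e / (2 * (D + 1)).
have e10 : 0 < e1 by rewrite /e1 divr_gt0 // mulr_gt0 //; lra.
have [d1 d10 hd1] := hG _ Xp e1 e10.
have hq : `|dotv (G (p t) - G x) d| <= L * t * D ^+ 2.
  apply: le_trans (CS _ _) _.
  have := hL _ _ Xp Xx.
  rewrite /p addrAC subrr add0r norm2Z ger0_norm // -/D => h.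
  rewrite -/D; have := norm2_ge0 (G (p t) - G x); nra.
exists (Num.min (d1 / (D + 1)) (e / (L * D ^+ 2 + 1))).
  rewrite lt_min !divr_gt0 //; try lra.
  have : 0 <= L * D ^+ 2 by rewrite mulr_ge0 // sqr_ge0.
  lra.
move=> r /andP[r0 r1]; rewrite lt_min => /andP[hr1 hr2].
set h := r - t.
have hh0 : 0 <= `|h| := normr_ge0 h.
have prt : p r - p t = h *: d.
  by apply/matrixP => i j; rewrite /p /h !mxE; ring.
have nrm : norm2 (p r - p t) = `|h| * D by rewrite prt norm2Z.
have small : norm2 (p r - p t) < d1.
  rewrite nrm.
  have : `|h| * (D + 1) < d1 by rewrite -ltr_pdivlMr //; lra.
  nra.
have err := hd1 _ small.
rewrite prt dotvZr norm2Z -/D in err.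
have e1D : e1 * (`|h| * D) <= e * `|h| / 2.
  rewrite /e1.
  have -> : e / (2 * (D + 1)) * (`|h| * D) = (e * `|h| / 2) * (D / (D + 1)).
    by field; lra.
  have D1 : 0 < D + 1 by lra.
  have hDD : D / (D + 1) <= 1 by rewrite ler_pdivrMr // mul1r; lra.
  have : 0 <= e * `|h| / 2 by rewrite !mulr_ge0 // ?invr_ge0 ?ler0n // ltW.
  nra.
have hLD : `|h| * (L * D ^+ 2) <= e.
  have p0 : 0 <= L * D ^+ 2 by rewrite mulr_ge0 // sqr_ge0.
  have p1 : 0 < L * D ^+ 2 + 1 by lra.
  have := hr2; rewrite ltr_pdivlMr // => hh.
  have : 0 <= L * D ^+ 2 by rewrite mulr_ge0 // sqr_ge0.
  nra.
have eqW : W r - W t = h * dotv (G (p t) - G x) d - L * t * D ^+ 2 * h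
     - L / 2 * h ^+ 2 * D ^+ 2 + (F (p r) - F (p t) - h * dotv (G (p t)) d) - e * h.
  rewrite /W /gd dotvBl /h; move: (F (p r)) (F (p t)) (F x) (dotv (G (p t)) d) (dotv (G x) d) => a b c u v; by field; rewrite ?pnatr_eq0.
set q := dotv (G (p t) - G x) d in hq eqW.
set er := F (p r) - F (p t) - h * dotv (G (p t)) d in err eqW.
have hq' := ler_norm q; have hq'' : - q <= `|q| by rewrite -normrN ler_norm.
have er1 := ler_norm er; have er2 : - er <= `|er| by rewrite -normrN ler_norm.
have LtD : 0 <= L * t * D ^+ 2 by rewrite mulr_ge0 ?mulr_ge0 // sqr_ge0.
split.
- move=> rt.
  have hn : h <= 0 by rewrite /h; lra.
  have ah : `|h| = - h by rewrite ler0_norm.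
  rewrite ah in e1D hLD err.
  have : 0 <= W r - W t.
    rewrite eqW.
    have : 0 <= h * (q - L * t * D ^+ 2) by nra.
    have k : 0 <= (e - (- h) * (L * D ^+ 2)) * (- h) by apply: mulr_ge0; lra.
    have : L / 2 * h ^+ 2 * D ^+ 2 <= e * (- h) / 2.
      have -> : L / 2 * h ^+ 2 * D ^+ 2 = (- h * (L * D ^+ 2)) * (- h) / 2 by field; rewrite ?pnatr_eq0.
      lra.
    lra.
  lra.
- move=> tr.
  have hn : 0 <= h by rewrite /h; lra.
  have ah : `|h| = h by rewrite ger0_norm.
  rewrite ah in e1D hLD err.
  have : W r - W t <= 0.
    rewrite eqW.
    have : h * (q - L * t * D ^+ 2) <= 0 by nra.
    have : 0 <= L / 2 * h ^+ 2 * D ^+ 2.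
      by rewrite !mulr_ge0 ?sqr_ge0 ?invr_ge0 ?ler0n.
    lra.
  lra.
Qed.

Lemma descent_abs n (X : 'cV[R]_n -> Prop) (F : 'cV[R]_n -> R) (G : 'cV[R]_n -> 'cV[R]_n) L :
  convex_set X -> (forall x, X x -> has_gradient F (G x) x) -> 0 <= L ->
  (forall x z, X x -> X z -> norm2 (G x - G z) <= L * norm2 (x - z)) ->
  forall x z, X x -> X z ->
  `|F z - F x - dotv (G x) (z - x)| <= L / 2 * norm2 (z - x) ^+ 2.
Proof.
move=> cX hG L0 hL x z Xx Xz.
have h1 := descent_up cX hG L0 hL Xx Xz.
have hG' : forall x, X x -> has_gradient (fun w => - F w) (- G x) x.
  move=> x0 X0 e e0; have [del del0 hd] := hG x0 X0 e e0.
  exists del => // w hw; have := hd w hw.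
  by rewrite dotvNl -normrN !opprD !opprK.
have hL' : forall x z, X x -> X z -> norm2 (- G x - - G z) <= L * norm2 (x - z).
  by move=> x0 z0 X0 Z0; rewrite -opprD norm2N; apply: hL.
have h2 := descent_up cX hG' L0 hL' Xx Xz.
rewrite dotvNl in h2.
rewrite ler_norml; apply/andP; split; lra.
Qed.

End Desc.

Set Implicit Arguments. Unset Strict Implicit. Unset Printing Implicit Defensive.
Section Iter.
Variable R : realType.

Lemma JJt_unit m n (Jk : 'M[R]_(m, n)) s : 0 < s -> (m <= n)%N ->
  (forall v : 'cV[R]_m, s * norm2 v <= norm2 (Jk^T *m v)) ->
  Jk *m Jk^T \in unitmx.
Proof.
move=> s0 mn hs; rewrite -row_free_unit -kermx_eq0; apply/eqP/row_matrixP => i.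
rewrite row0; set w := row i _.
have hw : w *m (Jk *m Jk^T) = 0 by rewrite /w -row_mul mulmx_ker row0.
have hw' : (Jk *m Jk^T) *m w^T = 0.
  have : (w *m (Jk *m Jk^T))^T = 0 by rewrite hw trmx0.
  by rewrite trmx_mul trmx_mul trmxK.
have : dotv (Jk^T *m w^T) (Jk^T *m w^T) = 0.
  by rewrite -dotv_mul mulmxA hw' dotv0r.
move=> /dotv_eq0 h0; have := hs w^T; rewrite h0 norm2_0 => h1.
have : norm2 w^T = 0 by have := norm2_ge0 w^T; nra.
by move=> /norm2_eq0 /(congr1 trmx); rewrite trmxK trmx0.
Qed.

Lemma decomp m n (Jk : 'M[R]_(m, n)) (d : 'cV[R]_n) (cc : 'cV[R]_m) s :
  0 < s -> min_sv_ge Jk s -> Jk *m d = - cc ->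
  exists u v, d = u + v /\ Jk *m u = 0 /\ s * norm2 v <= norm2 cc.
Proof.
move=> s0 [h1 h2] hJ.
case: (leqP m n) => mn.
- have hu := JJt_unit s0 mn (h1 mn).
  set M := Jk *m Jk^T in hu.
  set w0 := invmx M *m (- cc).
  set v := Jk^T *m w0.
  have Jv : Jk *m v = - cc by rewrite /v mulmxA mulKVmx.
  exists (d - v), v; split; first by rewrite subrK.
  split; first by rewrite mulmxBr hJ Jv subrr.
  have e : norm2 v ^+ 2 = dotv w0 (- cc) by rewrite norm2_sq /v -dotv_mul mulmxA -/M mulKVmx.
  have b1 : dotv w0 (- cc) <= norm2 w0 * norm2 cc by rewrite -(norm2N cc); apply: dotv_le.
  have b2 := h1 mn w0.
  have v0 := norm2_ge0 v; have c0 := norm2_ge0 cc; have w00 := norm2_ge0 w0.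
  have [vz|vp] := eqVneq (norm2 v) 0; first by rewrite vz mulr0.
  have vpos : 0 < norm2 v by rewrite lt_def vp v0.
  have : s * norm2 v * norm2 v <= norm2 cc * norm2 v by nra.
  by rewrite ler_pM2r.
- exists 0, d; split; first by rewrite add0r.
  split; first by rewrite mulmx0.
  by rewrite -(norm2N cc) -hJ; apply: (h2 (ltnW mn)).
Qed.

End Iter.

Set Implicit Arguments. Unset Strict Implicit. Unset Printing Implicit Defensive.
Section Bnds.
Variable R : realType.

Definition Umx (s kH ze Bg Bc : R) := (Bg + kH * (Bc / s)) / ze.
Definition Dmx (s kH ze Bg Bc : R) := Umx s kH ze Bg Bc + Bc / s.
Definition C1x (s kH ze Bg Bc : R) := Bg + kH * Dmx s kH ze Bg Bc.
Definition C2x (s kH ze Bg Bc : R) :=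
  2 / ze * ((2 * kH * Umx s kH ze Bg Bc + kH * (Bc / s)) / s) + 2 * Bc / s ^+ 2.

Lemma iter_bounds m n (Hk : 'M[R]_n) (Jk : 'M[R]_(m, n)) (g d : 'cV[R]_n)
  (cc y : 'cV[R]_m) (s kH ze Bg Bc : R) :
  0 < s -> 0 < kH -> 0 < ze -> min_sv_ge Jk s ->
  (forall w, norm2 (Hk *m w) <= kH * norm2 w) ->
  (forall u, Jk *m u = 0 -> ze * norm2 u ^+ 2 <= dotv u (Hk *m u)) ->
  Hk *m d + Jk^T *m y = - g -> Jk *m d = - cc ->
  norm2 g <= Bg -> norm2 cc <= Bc ->
  [/\ norm2 d <= Dmx s kH ze Bg Bc,
      dotv g d + Num.max (dotv d (Hk *m d)) 0 <= C1x s kH ze Bg Bc / s * norm1 cc,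
      norm2 d ^+ 2 <= 2 / ze * Num.max (dotv d (Hk *m d)) 0 + C2x s kH ze Bg Bc * norm1 cc
    & 0 <= C1x s kH ze Bg Bc].
Proof.
move=> s0 kH0 ze0 hsv hH hZ hK1 hK2 hg hc.
have [u [v [ed [Ju hv]]]] := decomp s0 hsv hK2.
set nu := norm2 u; set nv := norm2 v; set nc := norm2 cc; set n1 := norm1 cc.
set ng := norm2 g; set nd := norm2 d.
have {}hg : ng <= Bg := hg. have {}hc : nc <= Bc := hc. have {}hv : s * nv <= nc := hv.
have nu0 : 0 <= nu := norm2_ge0 u. have nv0 : 0 <= nv := norm2_ge0 v.
have nc0 : 0 <= nc := norm2_ge0 cc. have ng0 : 0 <= ng := norm2_ge0 g.
have nd0 : 0 <= nd := norm2_ge0 d.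
have nc1 : nc <= n1 := norm2_le1 cc.
have Bc0 : 0 <= Bc by lra.
have Bg0 : 0 <= Bg by lra.
have key : dotv u (Hk *m d) = - dotv u g.
  have : dotv u (Jk^T *m y) = 0 by rewrite dotv_mul trmxK Ju dotv0l.
  have e : Hk *m d = - g - Jk^T *m y by rewrite -hK1 addrK.
  rewrite e dotvBr dotvNr => ->; lra.
have eHd : Hk *m d = Hk *m u + Hk *m v by rewrite ed mulmxDr.
set uHu := dotv u (Hk *m u); set uHv := dotv u (Hk *m v).
set vHu := dotv v (Hk *m u); set vHv := dotv v (Hk *m v).
have b1 : `|uHv| <= kH * (nu * nv) := dotv_bnd u v hH.
have b2 : `|vHu| <= kH * (nv * nu) := dotv_bnd v u hH.
have b3 : `|vHv| <= kH * (nv * nv) := dotv_bnd v v hH.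
have b4 : `|dotv v (Hk *m d)| <= kH * (nv * nd) := dotv_bnd v d hH.
have b5 : `|dotv u g| <= nu * ng := CS u g.
have b6 : `|dotv g v| <= ng * nv := CS g v.
have hzu : ze * nu ^+ 2 <= uHu := hZ u Ju.
have uHd : dotv u (Hk *m d) = uHu + uHv by rewrite eHd dotvDr.
have vHd : dotv v (Hk *m d) = vHu + vHv by rewrite eHd dotvDr.
have dHd : dotv d (Hk *m d) = uHu + uHv + vHu + vHv.
  by rewrite {1}ed dotvDl uHd vHd addrA.
have gd : dotv g d = - dotv u (Hk *m d) + dotv g v.
  by rewrite {1}ed dotvDr key opprK dotvC.
have nvs : nv <= Bc / s by rewrite ler_pdivlMr // mulrC; lra.
have nvs1 : nv <= n1 / s by rewrite ler_pdivlMr // mulrC; lra.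
have hU : nu <= Umx s kH ze Bg Bc.
  rewrite /Umx ler_pdivlMr //.
  have e1 : ze * nu ^+ 2 <= nu * ng + kH * (nu * nv).
    have := ler_norm (dotv u g); have := ler_norm uHv.
    have := lerNnormlW b5; have := lerNnormlW b1. lra.
  have [z|nzp] := eqVneq nu 0.
    rewrite z mul0r; apply: addr_ge0 => //; apply: mulr_ge0; [lra|]; apply: divr_ge0; lra.
  have nup : 0 < nu by rewrite lt_def nzp nu0.
  have e2 : ze * nu <= ng + kH * nv.
    have : nu * (ze * nu) <= nu * (ng + kH * nv) by nra.
    by rewrite ler_pM2l.
  have : kH * nv <= kH * (Bc / s) by rewrite ler_pM2l.
  lra.
have Um0 : 0 <= Umx s kH ze Bg Bc by lra.
have hD : nd <= Dmx s kH ze Bg Bc.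
  have : nd <= nu + nv by rewrite /nd ed; exact: norm2D.
  rewrite /Dmx; lra.
have C10 : 0 <= C1x s kH ze Bg Bc.
  by rewrite /C1x; apply: addr_ge0 => //; apply: mulr_ge0; lra.
split => //.
- have den : dotv g d + Num.max (dotv d (Hk *m d)) 0 <= nv * C1x s kH ze Bg Bc.
    have gv : dotv g v <= ng * nv by apply: le_trans (ler_norm _) b6.
    have ngv : ng * nv <= Bg * nv by nra.
    rewrite /C1x.
    have [hp|hn] := leP 0 (dotv d (Hk *m d)).
    + idtac.
      have : dotv v (Hk *m d) <= kH * (nv * nd) by apply: le_trans (ler_norm _) b4.
      have : kH * (nv * nd) <= kH * (nv * Dmx s kH ze Bg Bc) by rewrite ler_pM2l // ler_wpM2l.
      lra.
    + rewrite ?addr0 gd uHd.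
      have : uHv >= - (kH * (nu * nv)) by apply: lerNnormlW.
      have : 0 <= ze * nu ^+ 2 by apply: mulr_ge0; [lra|exact: sqr_ge0].
      have : kH * (nu * nv) <= kH * (Dmx s kH ze Bg Bc * nv).
        apply: ler_wpM2l; [lra|]; apply: ler_wpM2r => //.
        have : 0 <= Bc / s by apply: divr_ge0; lra.
        rewrite /Dmx; lra.
      lra.
  apply: le_trans den _.
  have -> : C1x s kH ze Bg Bc / s * n1 = n1 / s * C1x s kH ze Bg Bc.
    by field; rewrite gt_eqF.
  exact: ler_wpM2r.
- set M := Num.max (dotv d (Hk *m d)) 0.
  have M0 : dotv d (Hk *m d) <= M by apply: mx_ge1.
  set K := 2 * kH * Umx s kH ze Bg Bc + kH * (Bc / s).
  have K0 : 0 <= K.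
    have : 0 <= Bc / s by apply: divr_ge0; lra.
    rewrite /K; nra.
  have hu2 : ze * nu ^+ 2 <= M + K * nv.
    have a1 := lerNnormlW b1; have a2 := lerNnormlW b2; have a3 := lerNnormlW b3.
    have : kH * (nu * nv) <= kH * (Umx s kH ze Bg Bc * nv) by rewrite ler_pM2l // ler_wpM2r.
    have : kH * (nv * nv) <= kH * (Bc / s * nv) by rewrite ler_pM2l // ler_wpM2r.
    rewrite /K; lra.
  have hd2 : nd ^+ 2 <= 2 * nu ^+ 2 + 2 * nv ^+ 2.
    have h0 : nd <= nu + nv by rewrite /nd ed; apply: norm2D.
    have h1 : nd * nd <= (nu + nv) * (nu + nv) by apply: ler_pM.
    have h2 : 0 <= (nu - nv) * (nu - nv) by rewrite -expr2 sqr_ge0.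
    rewrite !expr2; nra.
  have hv2 : nv ^+ 2 <= Bc / s * (n1 / s).
    have : nv * nv <= Bc / s * nv by apply: ler_wpM2r.
    have : Bc / s * nv <= Bc / s * (n1 / s) by apply: ler_wpM2l => //; apply: divr_ge0; lra.
    rewrite expr2; lra.
  have hu2' : nu ^+ 2 <= (M + K * (n1 / s)) / ze.
    rewrite ler_pdivlMr // mulrC.
    have : K * nv <= K * (n1 / s) by rewrite ler_wpM2l.
    lra.
  have -> : C2x s kH ze Bg Bc * n1 = 2 / ze * (K * (n1 / s)) + 2 * (Bc / s * (n1 / s)).
    rewrite /C2x -/K; field; rewrite ?gt_eqF //.
  have -> : 2 / ze * M + (2 / ze * (K * (n1 / s)) + 2 * (Bc / s * (n1 / s)))
          = 2 * ((M + K * (n1 / s)) / ze) + 2 * (Bc / s * (n1 / s)).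
    field; rewrite ?gt_eqF //.
  lra.
Qed.

End Bnds.

Set Implicit Arguments. Unset Strict Implicit. Unset Printing Implicit Defensive.
Section Gen.
Variable R : realType.
Local Open Scope classical_set_scope.

Lemma tau_step n (eps sig taup K n1 : R) (g : 'cV[R]_n) (H : 'M[R]_n) (d : 'cV[R]_n) :
  0 < taup -> 0 < eps < 1 -> 0 < sig < 1 -> 0 < K -> 0 <= n1 ->
  dotv g d + Num.max (dotv d (H *m d)) 0 <= K * n1 ->
  let t := tau_next eps sig taup g H d n1 in
  [/\ 0 < t, t <= taup, Num.min taup ((1 - eps) * ((1 - sig) / K)) <= t &
      t * (dotv g d + Num.max (dotv d (H *m d)) 0) <= (1 - sig) * n1].
Proof.
move=> tp /andP[e0 e1] /andP[s0 s1] K0 n10.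
rewrite /tau_next /=.
set den := dotv g d + Num.max (dotv d (H *m d)) 0 => hden.
have cK : 0 < (1 - eps) * ((1 - sig) / K) by apply: mulr_gt0; [lra|apply: divr_gt0; lra].
case: ifP => hd.
  split => //; first by rewrite ge_min lexx.
  have : taup * den <= 0 by rewrite pmulr_rle0.
  have : 0 <= (1 - sig) * n1 by apply: mulr_ge0; lra.
  lra.
have dp : 0 < den by rewrite ltNge hd.
have n1p : 0 < n1 by nra.
set tr := (1 - sig) * n1 / den.
have trd : tr * den = (1 - sig) * n1 by rewrite /tr mulfVK // gt_eqF.
have trK : (1 - sig) / K <= tr.
  rewrite /tr ler_pdivlMr // mulrAC ler_pdivrMr //.
  have : 0 <= 1 - sig by lra.
  nra.
case: ifP => ht.
  split => //; first by rewrite ge_min lexx.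
  by rewrite -trd ler_pM2r.
have trp : 0 < tr by apply: lt_le_trans trK; apply: divr_gt0; lra.
have ht' : tr < taup by rewrite ltNge ht.
split.
- by apply: mulr_gt0; lra.
- nra.
- rewrite ge_min; apply/orP; right. rewrite ler_pM2l; lra.
- rewrite -mulrA trd. have : 0 <= (1 - sig) * n1 by apply: mulr_ge0; lra. nra.
Qed.

Lemma sd_alg (tau fx gd n1 M dqv eta a Lam nd2 : R) :
  dqv = - tau * (gd + 2^-1 * M) + n1 -> 0 <= M -> 0 < tau -> 0 < eta < 1 ->
  0 <= n1 -> 0 < a ->
  ((a <= 1 /\ Lam * a * nd2 <= 2 * (1 - eta) * dqv) \/
   (1 < a /\ Lam * a * nd2 = 2 * (1 - eta) * dqv - 4 * n1)) ->
  tau * fx + a * tau * gd + `|1 - a| * n1 + 2^-1 * Lam * a ^+ 2 * nd2 <=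
  (tau * fx + n1) - eta * a * dqv.
Proof.
move=> edq M0 t0 /andP[e0 e1] n10 a0 [[a1 h]|[a1 h]].
- rewrite ger0_norm; last lra.
  have e2 : 2^-1 * Lam * a ^+ 2 * nd2 = 2^-1 * a * (Lam * a * nd2) by rewrite expr2; ring.
  rewrite e2.
  have : 2^-1 * a * (Lam * a * nd2) <= 2^-1 * a * (2 * (1 - eta) * dqv).
    by rewrite ler_pM2l // mulr_gt0 // invr_gt0 ltr0n.
  have : 0 <= tau * M * a by rewrite !mulr_ge0 // ltW.
  rewrite edq. move=> h1 h2.
  have e3 : 2^-1 * a * (2 * (1 - eta) * (- tau * (gd + 2^-1 * M) + n1)) =
     a * (1 - eta) * (- tau * gd + n1) - 2^-1 * (1 - eta) * (tau * M * a).
    by field.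
  rewrite e3 in h2.
  have e4 : eta * a * (- tau * (gd + 2^-1 * M) + n1) =
     eta * (a * (- tau * gd + n1)) - 2^-1 * eta * (tau * M * a) by field.
  rewrite e4.
  have e5 : a * (1 - eta) * (- tau * gd + n1) = a * (- tau * gd + n1) - eta * (a * (- tau * gd + n1)) by ring.
  rewrite e5 in h2.
  have e6 : (1 - a) * n1 = n1 - a * n1 by ring.
  have e7 : a * tau * gd = - (a * (- tau * gd + n1)) + a * n1 by ring.
  rewrite e6 e7.
  move: h1 => h1.
  lra.
- rewrite ler0_norm; last lra.
  have e2 : 2^-1 * Lam * a ^+ 2 * nd2 = 2^-1 * a * (Lam * a * nd2) by rewrite expr2; ring.
  rewrite e2 h edq.
  have : 0 <= tau * M * a by rewrite !mulr_ge0 // ltW.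
  have : 0 <= n1 by [].
  move=> h1 h2.
  have e3 : tau * fx + a * tau * gd + - (1 - a) * n1 +
    2^-1 * a * (2 * (1 - eta) * (- tau * (gd + 2^-1 * M) + n1) - 4 * n1)
    = tau * fx + n1 - eta * a * (- tau * (gd + 2^-1 * M) + n1)
      - 2^-1 * (tau * M * a) - 2 * n1 by field.
  rewrite e3; lra.
Qed.

Lemma alg1_props (eta Lam dqv n1 nd2 kq Lmax : R) :
  0 < eta < 1 -> 0 < Lam -> Lam <= Lmax -> 0 < nd2 -> 0 < kq -> kq * nd2 <= dqv ->
  0 <= n1 ->
  let a := alg1_step eta Lam dqv n1 nd2 in
  [/\ 0 < a, Num.min 1 (2 * (1 - eta) * kq / Lmax) <= a &
   ((a <= 1 /\ Lam * a * nd2 <= 2 * (1 - eta) * dqv) \/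
    (1 < a /\ Lam * a * nd2 = 2 * (1 - eta) * dqv - 4 * n1))].
Proof.
move=> /andP[e0 e1] L0 LL nd0 kq0 hq n10.
rewrite /alg1_step /=.
have Lnd : 0 < Lam * nd2 by apply: mulr_gt0.
have dqp : 0 < dqv by nra.
set ah := 2 * (1 - eta) * dqv / (Lam * nd2).
have ahp : 0 < ah by rewrite /ah divr_gt0 //; apply: mulr_gt0; lra.
have ahe : Lam * ah * nd2 = 2 * (1 - eta) * dqv by rewrite /ah; field; rewrite ?gt_eqF.
have Lm0 : 0 < Lmax by lra.
have ahl : 2 * (1 - eta) * kq / Lmax <= ah.
  have A0 : 0 <= 2 * (1 - eta) * kq by apply: mulr_ge0 => //; lra.
  have s1 : 2 * (1 - eta) * kq / Lmax <= 2 * (1 - eta) * kq / Lam.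
    apply: ler_wpM2l => //; rewrite lef_pV2 ?posrE //.
  have s2 : 2 * (1 - eta) * kq / Lam = 2 * (1 - eta) * (kq * nd2) / (Lam * nd2).
    by field; rewrite ?gt_eqF.
  have s3 : 2 * (1 - eta) * (kq * nd2) / (Lam * nd2) <= ah.
    rewrite /ah; apply: ler_wpM2r; first by rewrite invr_ge0 ltW.
    apply: ler_wpM2l => //; lra.
  lra.
case: ifP => h1.
  split => //; first by rewrite ge_min ahl orbT.
  by left; split; [exact: ltW|rewrite ahe].
have h1' : 1 <= ah by rewrite leNgt h1.
case: ifP => h2.
  split => //; first by rewrite ge_min lexx.
  left; split => //.
  rewrite mulr1 -ahe; have : 0 < Lam * nd2 by []. nra.
have h2' : 1 < ah - 4 * n1 / (Lam * nd2) by rewrite ltNge h2.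
split; first lra.
  rewrite ge_min; apply/orP; left; exact: ltW.
right; split => //.
rewrite mulrBr mulrBl ahe; congr (_ - _).
by field; rewrite ?gt_eqF.
Qed.

Lemma tele (psi q : nat -> R) (c : R) : 0 < c -> (forall k, 0 <= psi k) ->
  (forall k, 0 <= q k) -> (forall k, psi k.+1 <= psi k - c * q k) -> lim0 q.
Proof.
move=> c0 p0 q0 hs e e0.
have mono : forall k j, (k <= j)%N -> psi j <= psi k.
  move=> k j /subnK <-; elim: (j - k)%N => [|i IH] //=.
  rewrite addSn; apply: le_trans (hs _) _; have := q0 (i + k)%N; nra.
pose E := [set x : R | exists k, x = - psi k].
have hE : has_sup E.
  split; first by exists (- psi 0%N), 0%N.
  exists 0 => x [k ->]; rewrite oppr_le0; exact: p0.
have ce : 0 < c * e by apply: mulr_gt0.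
have [x [k0 ->] hx] := sup_adherent ce hE.
exists k0 => k hk.
have ub : - psi k.+1 <= sup E by apply: sup_upper_bound => //; exists k.+1.
have := mono _ _ hk; have := hs k.
rewrite ger0_norm //.
move=> h1 h2.
have : c * q k < c * e by lra.
by rewrite ltr_pM2l.
Qed.

End Gen.

Set Implicit Arguments. Unset Strict Implicit. Unset Printing Implicit Defensive.
Section Mer.
Variable R : realType.

Lemma gradc_dot m n (J : 'cV[R]_n -> 'M[R]_(m, n)) x i (d : 'cV[R]_n) :
  dotv (gradc J x i) d = (J x *m d) i ord0.
Proof. by rewrite /gradc /dotv mxE; apply: eq_bigr => j _; rewrite !mxE. Qed.

Lemma merit_bound n m (f : 'cV[R]_n -> R) (c : 'cV[R]_n -> 'cV[R]_m) (Jx : 'M[R]_(m, n))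
  (x d g : 'cV[R]_n) (a tau La : R) (ga : 'I_m -> R) :
  Jx *m d = - c x ->
  f (x + a *: d) <= f x + a * dotv g d + 2^-1 * La * a ^+ 2 * norm2 d ^+ 2 ->
  (forall i, `|c (x + a *: d) i ord0| <=
     `|c x i ord0 + a * (Jx *m d) i ord0| + 2^-1 * ga i * a ^+ 2 * norm2 d ^+ 2) ->
  0 <= tau ->
  merit f c (x + a *: d) tau <= tau * f x + a * tau * dotv g d + `|1 - a| * norm1 (c x)
     + 2^-1 * (tau * La + \sum_i ga i) * a ^+ 2 * norm2 d ^+ 2.
Proof.
move=> hJ hf hc t0; rewrite /merit.
have h1 : norm1 (c (x + a *: d)) <= `|1 - a| * norm1 (c x) + 2^-1 * (\sum_i ga i) * a ^+ 2 * norm2 d ^+ 2.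
  have eS : \sum_i (2^-1 * ga i * a ^+ 2 * norm2 d ^+ 2) = 2^-1 * (\sum_i ga i) * a ^+ 2 * norm2 d ^+ 2.
    by rewrite -!mulr_suml -mulr_sumr.
  apply: (@le_trans _ _ (\sum_i (`|1 - a| * `|c x i ord0| + 2^-1 * ga i * a ^+ 2 * norm2 d ^+ 2))).
    rewrite /norm1; apply: ler_sum => i _.
    apply: le_trans (hc i) _; rewrite hJ mxE.
    have -> : c x i ord0 + a * - c x i ord0 = (1 - a) * c x i ord0 by ring.
    by rewrite normrM.
  by rewrite big_split /= eS -mulr_sumr.
have h2 : tau * f (x + a *: d) <= tau * (f x + a * dotv g d + 2^-1 * La * a ^+ 2 * norm2 d ^+ 2).
  exact: ler_wpM2l.
have e : 2^-1 * (tau * La + \sum_i ga i) * a ^+ 2 * norm2 d ^+ 2 =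
  tau * (2^-1 * La * a ^+ 2 * norm2 d ^+ 2) + 2^-1 * (\sum_i ga i) * a ^+ 2 * norm2 d ^+ 2 by ring.
rewrite e. move: h1 h2; set S := \sum_i ga i; set N := norm2 d ^+ 2.
move=> h1 h2. have e2 : tau * (f x + a * dotv g d + 2^-1 * La * a ^+ 2 * N) =
   tau * f x + a * tau * dotv g d + tau * (2^-1 * La * a ^+ 2 * N) by ring.
lra.
Qed.

Lemma LF_holds n (X : 'cV[R]_n -> Prop) (f : 'cV[R]_n -> R) (gf : 'cV[R]_n -> 'cV[R]_n) L La x d a :
  convex_set X -> (forall x, X x -> has_gradient f (gf x) x) -> 0 <= L -> L <= La ->
  (forall x z, X x -> X z -> norm2 (gf x - gf z) <= L * norm2 (x - z)) ->
  X x -> X (x + a *: d) ->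
  f (x + a *: d) <= f x + a * dotv (gf x) d + 2^-1 * La * a ^+ 2 * norm2 d ^+ 2.
Proof.
move=> cX hg L0 LLa hL Xx Xz.
have := descent_abs cX hg L0 hL Xx Xz.
have ez : x + a *: d - x = a *: d by rewrite addrC addKr.
rewrite ez dotvZr norm2Z exprMn real_normK ?num_real // => h.
have := ler_norm (f (x + a *: d) - f x - a * dotv (gf x) d).
have : L / 2 * (a ^+ 2 * norm2 d ^+ 2) <= 2^-1 * La * a ^+ 2 * norm2 d ^+ 2.
  have : 0 <= a ^+ 2 * norm2 d ^+ 2 by rewrite mulr_ge0 ?sqr_ge0.
  rewrite -!mulrA mulrC; nra.
lra.
Qed.

Lemma LC_holds n m (X : 'cV[R]_n -> Prop) (c : 'cV[R]_n -> 'cV[R]_m) (J : 'cV[R]_n -> 'M[R]_(m, n))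
   i gam ga x d a :
  convex_set X -> (forall x, X x -> has_gradient (fun z => c z i ord0) (gradc J x i) x) ->
  0 <= gam -> gam <= ga ->
  (forall x z, X x -> X z -> norm2 (gradc J x i - gradc J z i) <= gam * norm2 (x - z)) ->
  X x -> X (x + a *: d) ->
  `|c (x + a *: d) i ord0| <= `|c x i ord0 + a * dotv (gradc J x i) d| + 2^-1 * ga * a ^+ 2 * norm2 d ^+ 2.
Proof.
move=> cX hg L0 LLa hL Xx Xz.
have := descent_abs cX (hg) L0 hL Xx Xz.
have ez : x + a *: d - x = a *: d by rewrite addrC addKr.
rewrite /= ez dotvZr norm2Z exprMn real_normK ?num_real // => h.
have : gam / 2 * (a ^+ 2 * norm2 d ^+ 2) <= 2^-1 * ga * a ^+ 2 * norm2 d ^+ 2.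
  have : 0 <= a ^+ 2 * norm2 d ^+ 2 by rewrite mulr_ge0 ?sqr_ge0.
  rewrite -!mulrA mulrC; nra.
move=> h2.
set A := c (x + a *: d) i ord0; set B := c x i ord0 + a * dotv (gradc J x i) d.
have : `|A| <= `|A - B| + `|B|.
  by have := ler_normD (A - B) B; rewrite subrK.
have : A - B = c (x + a *: d) i ord0 - c x i ord0 - a * dotv (gradc J x i) d by rewrite /A /B; ring.
move=> ->; lra.
Qed.

End Mer.

Unset Implicit Arguments. Set Strict Implicit.

Theorem theorem2p18 (R : realType) (n m : nat)
  (X : 'cV[R]_n -> Prop) (f : 'cV[R]_n -> R) (gf : 'cV[R]_n -> 'cV[R]_n)
  (c : 'cV[R]_n -> 'cV[R]_m) (J : 'cV[R]_n -> 'M[R]_(m, n))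
  (H : nat -> 'M[R]_n) (x d : nat -> 'cV[R]_n) (y : nat -> 'cV[R]_m)
  (tau alpha : nat -> R)
  (tau0 eps sig eta rho Lm1 nu abar : R) (gm1 : 'I_m -> R) :
  standing_assumption X f gf c J ->
  (forall k, X (x k)) ->
  matrix_assumption H (fun k => J (x k)) ->
  0 < tau0 -> 0 < eps < 1 -> 0 < sig < 1 -> 0 < eta < 1 ->
  common_iteration gf c J H x d y tau alpha tau0 eps sig ->
  no_finite_termination gf c J x y ->
  (generated_by_alg1 X f gf c J H x d tau alpha eta rho Lm1 gm1 \/
   generated_by_alg2 X f gf c H x d tau alpha eta nu abar) ->
  lim0 (fun k => norm2 (d k)) /\
  lim0 (fun k => norm2 (c (x k))) /\
  lim0 (fun k => norm2 (gf (x k) + (J (x k))^T *m y k)).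
Proof.
move=> hSA hX hMA tau0p heps hsig heta hC hNT halg.
case: hSA => oX [cX [hgf [_ [hcg [[flow hflow] [[Bg hBg] [[L hL] [[Bc hBc] [_ [hgam [s s0 hsv]]]]]]]]]]].
case: hMA => kH [ze [kH0 [ze0 hM]]].
have [gam hgam'] := fin_all_exists hgam.
pose L' := Num.max L 0.
have L'0 : 0 <= L' by apply: mx_ge0.
have hL' : forall x z, X x -> X z -> norm2 (gf x - gf z) <= L' * norm2 (x - z).
  move=> x1 z1 X1 Z1; apply: le_trans (hL _ _ X1 Z1) _.
  by apply: ler_wpM2r; [exact: norm2_ge0 | exact: mx_ge1].
pose gm' i := Num.max (gam i) 0.
have gm'0 : forall i, 0 <= gm' i by move=> i; apply: mx_ge0.
have hgm' : forall i x z, X x -> X z ->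
   norm2 (gradc J x i - gradc J z i) <= gm' i * norm2 (x - z).
  move=> i x1 z1 X1 Z1; apply: le_trans (hgam' i _ _ X1 Z1) _.
  by apply: ler_wpM2r; [exact: norm2_ge0 | exact: mx_ge1].
pose Dm := Dmx s kH ze Bg Bc. pose C1 := C1x s kH ze Bg Bc. pose C2 := C2x s kH ze Bg Bc.
have hB : forall k, [/\ norm2 (d k) <= Dm,
      dotv (gf (x k)) (d k) + Num.max (dotv (d k) (H k *m d k)) 0 <= C1 / s * norm1 (c (x k)),
      norm2 (d k) ^+ 2 <= 2 / ze * Num.max (dotv (d k) (H k *m d k)) 0 + C2 * norm1 (c (x k))
    & 0 <= C1].
  move=> k; have [K1 [K2 _]] := hC k; have [_ [hHb hHz]] := hM k.
  exact: (iter_bounds s0 kH0 ze0 (hsv _ (hX k)) hHb hHz K1 K2 (hBg _ (hX k)) (hBc _ (hX k))).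
have C10 : 0 <= C1 by have [] := hB 0%N.
pose K := (C1 + 1) / s.
have K0 : 0 < K by apply: divr_gt0 => //; lra.
have hden : forall k, dotv (gf (x k)) (d k) + Num.max (dotv (d k) (H k *m d k)) 0 <= K * norm1 (c (x k)).
  move=> k; have [_ h _ _] := hB k; apply: le_trans h _.
  apply: ler_wpM2r; first exact: norm1_ge0.
  by apply: ler_wpM2r; [rewrite invr_ge0 ltW | lra].
pose cK := (1 - eps) * ((1 - sig) / K).
have cK0 : 0 < cK by apply: mulr_gt0; [lra | apply: divr_gt0 => //; lra].
pose tmin := Num.min tau0 cK.
have tmin0 : 0 < tmin by rewrite lt_min tau0p cK0.
have htau : forall k, [/\ 0 < tau k, tau k <= tau0, tmin <= tau k &
     tau k * (dotv (gf (x k)) (d k) + Num.max (dotv (d k) (H k *m d k)) 0)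
       <= (1 - sig) * norm1 (c (x k))].
  elim => [|k IH].
  - have [_ [_ [T0 _]]] := hC 0%N.
    move: (tau_step tau0p heps hsig K0 (norm1_ge0 _) (hden 0%N)) => /= [t1 t2 t3 t4].
    rewrite T0; split => //.
  - have [_ [_ [T0 _]]] := hC k.+1.
    have [p1 p2 p3 p4] := IH.
    move: (tau_step p1 heps hsig K0 (norm1_ge0 _) (hden k.+1)) => /= [t1 t2 t3 t4].
    rewrite T0; split => //; first exact: le_trans t2 p2.
    apply: le_trans t3; rewrite le_min p3 /=; rewrite ge_min; apply/orP; right; exact: lexx.
have htdec : forall k, tau k.+1 <= tau k.
  move=> k; have [_ [_ [T0 _]]] := hC k.+1; have [p1 _ _ _] := htau k.
  move: (tau_step p1 heps hsig K0 (norm1_ge0 _) (hden k.+1)) => /= [t1 t2 t3 t4].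
  by rewrite T0.
pose C2' := Num.max C2 0.
have C2'0 : 0 <= C2' by apply: mx_ge0.
pose kq := Num.min (tmin * ze / 4) (sig / (C2' + 1)).
have kq0 : 0 < kq.
  rewrite lt_min; apply/andP; split; first by apply: divr_gt0 => //; apply: mulr_gt0.
  by apply: divr_gt0; lra.
have hdq : forall k,
    sig * norm1 (c (x k)) <= dq c (x k) (tau k) (gf (x k)) (H k) (d k) /\
    kq * norm2 (d k) ^+ 2 <= dq c (x k) (tau k) (gf (x k)) (H k) (d k).
  move=> k.
  have [_ _ hd2 _] := hB k; have [t1 _ t3 t4] := htau k.
  have M0 := mx_ge0 (dotv (d k) (H k *m d k)).
  move: hd2 t4 M0; rewrite /dq.
  move: (Num.max (dotv (d k) (H k *m d k)) 0) => M.
  have n10 := norm1_ge0 (c (x k)).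
  move: (norm1 (c (x k))) n10 => n1 n10.
  move: (dotv (gf (x k)) (d k)) => gd.
  have nd0 : 0 <= norm2 (d k) ^+ 2 by apply: sqr_ge0.
  move: (norm2 (d k) ^+ 2) nd0 => nd2 nd0 hd2 t4 M0.
  have h1 : 2^-1 * tmin * M <= 2^-1 * tau k * M.
    by apply: ler_wpM2r => //; apply: ler_wpM2l => //; rewrite invr_ge0 ler0n.
  have h2 : 0 <= 2^-1 * tmin * M by apply: mulr_ge0 => //; apply: mulr_ge0; [rewrite invr_ge0 ler0n| exact: ltW].
  have edq : - tau k * (gd + 2^-1 * M) + n1 = - (tau k * (gd + M)) + 2^-1 * tau k * M + n1 by field.
  split; first lra.
  have hd2' : nd2 <= 2 / ze * M + C2' * n1.
    apply: le_trans hd2 _; have : C2 <= C2' by apply: mx_ge1.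
    move=> h; have := ler_wpM2r n10 h; lra.
  have A0 : 0 <= 2 / ze * M by apply: mulr_ge0 => //; apply: divr_ge0; [rewrite ler0n|exact: ltW].
  have k1 : kq <= tmin * ze / 4 by rewrite ge_min lexx.
  have k2 : kq <= sig / (C2' + 1) by rewrite ge_min lexx orbT.
  have s1 : kq * (2 / ze * M) <= 2^-1 * tmin * M.
    have -> : 2^-1 * tmin * M = tmin * ze / 4 * (2 / ze * M) by field; rewrite gt_eqF.
    exact: ler_wpM2r.
  have s2 : kq * (C2' * n1) <= sig * n1.
    have : kq * (C2' * n1) <= sig / (C2' + 1) * (C2' * n1) by apply: ler_wpM2r => //; apply: mulr_ge0.
    have : sig / (C2' + 1) * (C2' * n1) <= sig * n1.
      have -> : sig / (C2' + 1) * (C2' * n1) = sig * n1 * (C2' / (C2' + 1)) by field; lra.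
      apply: ler_piMr; first by apply: mulr_ge0 => //; lra.
      by rewrite ler_pdivrMr ?mul1r; lra.
    lra.
  have : kq * nd2 <= kq * (2 / ze * M + C2' * n1) by apply: ler_wpM2l => //; exact: ltW.
  lra.
have hnd : forall k, 0 < norm2 (d k) ^+ 2.
  move=> k; rewrite lt_def sqr_ge0 andbT sqrf_eq0; apply/negP => /eqP h0.
  have d0 := norm2_eq0 h0.
  have [K1 [K2 _]] := hC k.
  apply: (hNT k); split.
    by rewrite d0 mulmx0 add0r in K1; rewrite K1 subrr.
  by rewrite d0 mulmx0 in K2; apply/eqP; rewrite -oppr_eq0 -K2.
have hdqp : forall k, 0 < dq c (x k) (tau k) (gf (x k)) (H k) (d k).
  move=> k; have [_ h] := hdq k; apply: lt_le_trans h; exact: mulr_gt0.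
have sd_from : forall k a La (ga : 'I_m -> R), 0 < a ->
   f (x k + a *: d k) <= f (x k) + a * dotv (gf (x k)) (d k) + 2^-1 * La * a ^+ 2 * norm2 (d k) ^+ 2 ->
   (forall i, `|c (x k + a *: d k) i ord0| <=
      `|c (x k) i ord0 + a * dotv (gradc J (x k) i) (d k)| + 2^-1 * ga i * a ^+ 2 * norm2 (d k) ^+ 2) ->
   ((a <= 1 /\ (tau k * La + \sum_i ga i) * a * norm2 (d k) ^+ 2
        <= 2 * (1 - eta) * dq c (x k) (tau k) (gf (x k)) (H k) (d k)) \/
    (1 < a /\ (tau k * La + \sum_i ga i) * a * norm2 (d k) ^+ 2
        = 2 * (1 - eta) * dq c (x k) (tau k) (gf (x k)) (H k) (d k) - 4 * norm1 (c (x k)))) ->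
   SD f gf c H x d tau eta k a.
  move=> k a La ga a0 hf hc hcase.
  have [K1 [K2 _]] := hC k; have [t1 _ _ _] := htau k.
  have hc' : forall i, `|c (x k + a *: d k) i ord0| <=
      `|c (x k) i ord0 + a * (J (x k) *m d k) i ord0| + 2^-1 * ga i * a ^+ 2 * norm2 (d k) ^+ 2.
    by move=> i; rewrite -gradc_dot; exact: hc.
  have mb := merit_bound K2 hf hc' (ltW t1).
  rewrite /SD; apply: le_trans mb _; rewrite /merit.
  apply: (@sd_alg R (tau k) (f (x k)) (dotv (gf (x k)) (d k)) (norm1 (c (x k)))
            (Num.max (dotv (d k) (H k *m d k)) 0)) => //.
  - exact: mx_ge0.
  - exact: norm1_ge0.
have hamin : exists amin, 0 < amin /\ forall k, amin <= alpha k /\ SD f gf c H x d tau eta k (alpha k).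
  case: halg => [hA1|hA2].
  - case: hA1 => rho1 [Lm0 [gm0 [Lkj [gkj [jk hA]]]]].
    move: hA => /= hA.
    pose a k j := alg1_step eta (tau k * Lkj k j + \sum_(i < m) gkj k j i)
       (dq c (x k) (tau k) (gf (x k)) (H k) (d k)) (norm1 (c (x k))) (norm2 (d k) ^+ 2).
    pose LF k j := f (x k + a k j *: d k) <= f (x k) + a k j * dotv (gf (x k)) (d k)
                  + 2^-1 * Lkj k j * a k j ^+ 2 * norm2 (d k) ^+ 2.
    pose LC k j i := `|c (x k + a k j *: d k) i ord0| <=
                  `|c (x k) i ord0 + a k j * dotv (gradc J (x k) i) (d k)|
                  + 2^-1 * gkj k j i * a k j ^+ 2 * norm2 (d k) ^+ 2.
    pose Lprev k := if k is k'.+1 then Lkj k' (jk k') else Lm1.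
    pose gprev k i := if k is k'.+1 then gkj k' (jk k') i else gm1 i.
    have hA' : forall k,
      (0 < Lkj k 0%N /\ Lkj k 0%N <= Lprev k) /\
      (forall i, 0 < gkj k 0%N i /\ gkj k 0%N i <= gprev k i) /\
      (forall j, (j < jk k)%N ->
         ~ (SD f gf c H x d tau eta k (a k j) \/ (LF k j /\ forall i, LC k j i)) /\
         (LF k j -> Lkj k j.+1 = Lkj k j) /\ (~ LF k j -> Lkj k j.+1 = rho * Lkj k j) /\
         (forall i, (LC k j i -> gkj k j.+1 i = gkj k j i) /\
                    (~ LC k j i -> gkj k j.+1 i = rho * gkj k j i))) /\
      (SD f gf c H x d tau eta k (a k (jk k)) \/ (LF k (jk k) /\ forall i, LC k (jk k) i)) /\
      alpha k = a k (jk k) /\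
      (forall j, (j <= jk k)%N -> X (x k + a k j *: d k)).
      by move=> k; exact: hA k.
    clear hA.
    have rho0 : 0 < rho by lra.
    pose Lbar := Num.max Lm1 (rho * L').
    pose gbar i := Num.max (gm1 i) (rho * gm' i).
    pose inv k j := (0 < Lkj k j /\ Lkj k j <= Lbar) /\ forall i, 0 < gkj k j i /\ gkj k j i <= gbar i.
    have step : forall k j, (j < jk k)%N -> inv k j -> inv k j.+1.
      move=> k j hj [[L0 Lb] hg].
      have [_ [_ [hj' _]]] := hA' k.
      have [_ [LFe [nLFe LCe]]] := hj' j hj.
      have [_ [_ [_ [_ [_ Xj]]]]] := hA' k.
      have Xa := Xj j (ltnW hj).
      split.
      + case: (pselect (LF k j)) => hlf; first by rewrite LFe.
        rewrite nLFe //.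
        have lt : Lkj k j < L'.
          rewrite ltNge; apply/negP => hle; apply: hlf.
          exact: (LF_holds cX hgf L'0 hle hL' (hX k) Xa).
        split; first exact: mulr_gt0.
        have hr : rho * Lkj k j < rho * L' by rewrite ltr_pM2l.
        apply: le_trans (ltW hr) _; rewrite le_max lexx orbT //.
      + move=> i; have [hg0 hgb] := hg i; have [LCe1 LCe2] := LCe i.
        case: (pselect (LC k j i)) => hlc; first by rewrite LCe1.
        rewrite LCe2 //.
        have lt : gkj k j i < gm' i.
          rewrite ltNge; apply/negP => hle; apply: hlc.
          exact: (LC_holds (i:=i) (gam := gm' i) cX (fun x0 X0 => hcg x0 X0 i)
            (gm'0 i) hle (fun x0 z0 X0 Z0 => hgm' i x0 z0 X0 Z0) (hX k) Xa).
        split; first exact: mulr_gt0.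
        have hr : rho * gkj k j i < rho * gm' i by rewrite ltr_pM2l.
        apply: le_trans (ltW hr) _; rewrite le_max lexx orbT //.
    have base : forall k, Lprev k <= Lbar -> (forall i, gprev k i <= gbar i) -> inv k 0%N.
      move=> k h1 h2; have [[L0 Lp] [hg _]] := hA' k.
      split; first by split => //; apply: le_trans Lp h1.
      by move=> i; have [g0 gp] := hg i; split => //; apply: le_trans gp (h2 i).
    have hinv : forall k j, (j <= jk k)%N -> inv k j.
      elim => [|k IHk] j.
      - elim: j => [|j IHj] hj.
        + apply: base; first by rewrite /Lprev le_max lexx.
          by move=> i; rewrite /gprev le_max lexx.
        + exact: step hj (IHj (ltnW hj)).
      - have [[_ Lb] gb] := IHk (jk k) (leqnn _).
        elim: j => [|j IHj] hj.
        + apply: base => //= i; exact: (proj2 (gb i)).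
        + exact: step hj (IHj (ltnW hj)).
    pose Lmax := tau0 * Lbar + \sum_i gbar i.
    have gb0 : forall i, 0 < gbar i.
      by move=> i; apply: lt_le_trans (gm0 i) _; rewrite le_max lexx.
    have Lbar0 : 0 < Lbar by apply: lt_le_trans Lm0 _; rewrite le_max lexx.
    have sgb : 0 <= \sum_i gbar i by apply: sumr_ge0 => i _; exact: ltW.
    have Lmax0 : 0 < Lmax by rewrite /Lmax; have := mulr_gt0 tau0p Lbar0; lra.
    exists (Num.min 1 (2 * (1 - eta) * kq / Lmax)); split.
      rewrite lt_min ltr01 /=; apply: divr_gt0 => //; apply: mulr_gt0 => //; lra.
    move=> k.
    have [[L0 Lb] gb] := hinv k (jk k) (leqnn _).
    have [_ [_ [_ [acc [ea Xj]]]]] := hA' k.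
    have [t1 t2 _ _] := htau k.
    have sg0 : 0 <= \sum_i gkj k (jk k) i by apply: sumr_ge0 => i _; exact: ltW (proj1 (gb i)).
    have Lam0 : 0 < tau k * Lkj k (jk k) + \sum_i gkj k (jk k) i.
      have := mulr_gt0 t1 L0; lra.
    have LamLe : tau k * Lkj k (jk k) + \sum_i gkj k (jk k) i <= Lmax.
      rewrite /Lmax; apply: lerD.
        by apply: ler_pM => //; exact: ltW.
      by apply: ler_sum => i _; exact: (proj2 (gb i)).
    have [a0 amn cases] := alg1_props heta Lam0 LamLe (hnd k) kq0 (proj2 (hdq k)) (norm1_ge0 (c (x k))).
    rewrite ea; split; first exact: amn.
    case: acc => [//|[hlf hlc]].
    exact: (sd_from k _ (Lkj k (jk k)) (gkj k (jk k)) a0 hlf hlc cases).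
  - case: hA2 => /andP[nu0 nu1] [ab0 hB2].
    pose Lam2 := tau0 * L' + \sum_i gm' i + 1.
    have sg0 : 0 <= \sum_i gm' i by apply: sumr_ge0 => i _; exact: gm'0.
    have Lam20 : 0 < Lam2 by rewrite /Lam2; have := mulr_ge0 (ltW tau0p) L'0; lra.
    pose ast := Num.min 1 (2 * (1 - eta) * kq / Lam2).
    have ast0 : 0 < ast.
      rewrite lt_min ltr01 /=; apply: divr_gt0 => //; apply: mulr_gt0 => //; lra.
    have sdok : forall k a, 0 < a -> a <= ast -> X (x k + a *: d k) -> SD f gf c H x d tau eta k a.
      move=> k a a0 aa Xa.
      have hf := LF_holds cX hgf L'0 (lexx L') hL' (hX k) Xa.
      have hc : forall i, `|c (x k + a *: d k) i ord0| <=
          `|c (x k) i ord0 + a * dotv (gradc J (x k) i) (d k)| + 2^-1 * gm' i * a ^+ 2 * norm2 (d k) ^+ 2.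
        move=> i; exact: (LC_holds (i:=i) (gam := gm' i) (ga := gm' i) cX (fun x0 X0 => hcg x0 X0 i)
          (gm'0 i) (lexx _) (fun x0 z0 X0 Z0 => hgm' i x0 z0 X0 Z0) (hX k) Xa).
      apply: (sd_from k a L' gm') => //; left.
      have a1 : a <= 1 by apply: le_trans aa _; rewrite ge_min lexx.
      have a2 : a <= 2 * (1 - eta) * kq / Lam2 by apply: le_trans aa _; rewrite ge_min lexx orbT.
      split => //.
      have [t1 t2 _ _] := htau k.
      have [_ hq] := hdq k.
      have hnd0 := hnd k.
      have LL : tau k * L' + \sum_i gm' i <= Lam2.
        rewrite /Lam2; have := ler_wpM2r L'0 t2; lra.
      have LL0 : 0 <= tau k * L' + \sum_i gm' i by have := mulr_ge0 (ltW t1) L'0; lra.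
      have s1 : (tau k * L' + \sum_i gm' i) * a * norm2 (d k) ^+ 2 <= Lam2 * a * norm2 (d k) ^+ 2.
        by apply: ler_wpM2r; [exact: ltW | apply: ler_wpM2r => //; exact: ltW].
      have s2 : Lam2 * a * norm2 (d k) ^+ 2 <= Lam2 * (2 * (1 - eta) * kq / Lam2) * norm2 (d k) ^+ 2.
        by apply: ler_wpM2r; [exact: ltW | apply: ler_wpM2l => //; exact: ltW].
      have s3 : Lam2 * (2 * (1 - eta) * kq / Lam2) * norm2 (d k) ^+ 2 = 2 * (1 - eta) * (kq * norm2 (d k) ^+ 2).
        by field; rewrite gt_eqF.
      have s4 : 2 * (1 - eta) * (kq * norm2 (d k) ^+ 2) <= 2 * (1 - eta) * dq c (x k) (tau k) (gf (x k)) (H k) (d k).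
        by apply: ler_wpM2l => //; lra.
      lra.
    exists (Num.min abar (nu * ast)); split.
      by rewrite lt_min ab0 /=; apply: mulr_gt0.
    move=> k; have [j [ea [sdj [nsd Xj]]]] := hB2 k.
    rewrite ea; split => //.
    case: j ea sdj nsd Xj => [|j] ea sdj nsd Xj.
      by rewrite expr0 mul1r ge_min lexx.
    have pj : 0 < nu ^+ j * abar by apply: mulr_gt0 => //; apply: exprn_gt0.
    have nj : ast < nu ^+ j * abar.
      rewrite ltNge; apply/negP => hle.
      by apply: (nsd j (ltnSn j)); apply: sdok => //; apply: Xj; exact: leqnSn.
    rewrite exprS -mulrA ge_min; apply/orP; right.
    by apply: ler_wpM2l; [exact: ltW | exact: ltW].
have [amin [amin0 hA]] := hamin.
pose psi k := tau k * (f (x k) - flow) + norm1 (c (x k)).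
have hq : lim0 (fun k => dq c (x k) (tau k) (gf (x k)) (H k) (d k)).
  apply: (@tele R psi _ (eta * amin)).
  - by apply: mulr_gt0 => //; case/andP: heta.
  - move=> k; rewrite /psi; have [t1 _ _ _] := htau k; have := hflow _ (hX k).
    have := norm1_ge0 (c (x k)); move=> h1 h2.
    have : 0 <= tau k * (f (x k) - flow) by apply: mulr_ge0; [exact: ltW|lra].
    lra.
  - by move=> k; exact: ltW.
  - move=> k; rewrite /psi.
    have [_ sdk] := hA k; have [amk _] := hA k.
    have [_ [_ [_ [_ xk1]]]] := hC k.
    move: sdk; rewrite /SD /merit -xk1 => sdk.
    have fl := hflow _ (hX k.+1).
    have t1 : tau k.+1 * (f (x k.+1) - flow) <= tau k * (f (x k.+1) - flow).
      by apply: ler_wpM2r; [lra | exact: htdec].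
    have dq0 := ltW (hdqp k).
    have e0 : 0 < eta by case/andP: heta.
    have : eta * amin * dq c (x k) (tau k) (gf (x k)) (H k) (d k) <=
           eta * alpha k * dq c (x k) (tau k) (gf (x k)) (H k) (d k).
      by apply: ler_wpM2r => //; apply: ler_wpM2l => //; exact: ltW.
    lra.
have hdlim : lim0 (fun k => norm2 (d k)).
  move=> e e0.
  have [N hN] := hq (kq * e ^+ 2) (mulr_gt0 kq0 (exprn_gt0 2 e0)).
  exists N => k hk; have h3 := hN k hk.
  rewrite ger0_norm in h3; last exact: ltW.
  rewrite ger0_norm; last exact: norm2_ge0.
  have [_ h2] := hdq k.
  have : kq * norm2 (d k) ^+ 2 < kq * e ^+ 2 by apply: le_lt_trans h2 h3.
  rewrite ltr_pM2l // => h4.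
  rewrite ltNge; apply/negP => h5.
  have : e ^+ 2 <= norm2 (d k) ^+ 2 by rewrite ler_sqr ?nnegrE ?norm2_ge0 // ltW.
  lra.
split => //; split.
- move=> e e0.
  have [N hN] := hq (sig * e) (mulr_gt0 (proj1 (andP hsig)) e0).
  exists N => k hk; have h3 := hN k hk.
  rewrite ger0_norm in h3; last exact: ltW.
  rewrite ger0_norm; last exact: norm2_ge0.
  have [h2 _] := hdq k.
  have : sig * norm1 (c (x k)) < sig * e by apply: le_lt_trans h2 h3.
  rewrite ltr_pM2l; last by case/andP: hsig.
  have := norm2_le1 (c (x k)); lra.
- move=> e e0.
  have [N hN] := hdlim (e / kH) (divr_gt0 e0 kH0).
  exists N => k hk; have := hN k hk; rewrite ger0_norm ?norm2_ge0 // => h.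
  have [K1 _] := hC k; have [_ [hHb _]] := hM k.
  have -> : gf (x k) + (J (x k))^T *m y k = - (H k *m d k).
    have eg : gf (x k) = - (H k *m d k + (J (x k))^T *m y k) by rewrite K1 opprK.
    by rewrite eg opprD subrK.
  rewrite norm2N ger0_norm ?norm2_ge0 //; apply: le_lt_trans (hHb _) _.
  by rewrite -ltr_pdivlMl // mulrC.
Qed.
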